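(* For every $d \geq 1$ and $\varepsilon \leq \frac{1}{2}$, every algorithm for robust mean estimation of $d$-dimensional distributions with covariance $\Sigma \preceq \sigma^2 I$ in the population limit has, on some input, error \[ \mathbb{E}[\|\widehat{\mu} - \mu\|] \geq JUNG_d \cdot (1 + O(\varepsilon)) \cdot \sqrt{2\sigma^2\varepsilon}, \] where the $O(\cdot)$ hides an absolute constant (i.e. the bound is at least $JUNG_d(1-c\varepsilon)\sqrt{2\sigma^2\varepsilon}$ for an absolute constant $c$).
   Context: $JUNG_d := \sqrt{\frac{2d}{d+1}}$. Robust mean estimation in the population limit: there is an unknown true distribution $D$ on $\mathbb{R}^d$ with mean $\mu$ and covariance $\Sigma \preceq \sigma^2 I$; an adversary replaces it by any distribution $D'$ with total variation distance $TV(D, D') \leq \varepsilon$. The (possibly randomized) algorithm is given $\varepsilon$, $\sigma^2$ and the distribution $D'$ itself (not samples), and outputs $\widehat{\mu} \in \mathbb{R}^d$; its error is $\mathbb{E}\|\widehat{\mu} - \mu\|$, the expectation over the algorithm's randomness. ''On some input'' means there exist $\sigma$, such a $D$ and such a $D'$ for which the stated lower bound holds. *)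

(* Defs.v *)
(* R^d is modelled as [d.-tuple R], which
   mathcomp-analysis equips with the product (= Borel) sigma-algebra generated
   by the coordinate projections. *)
From HB Require Import structures.
From mathcomp Require Import all_boot all_order all_algebra.
From mathcomp Require Import all_classical all_reals all_analysis.
Set Implicit Arguments. Unset Strict Implicit. Unset Printing Implicit Defensive.
Import Order.TTheory GRing.Theory Num.Theory.
Local Open Scope classical_set_scope.
Local Open Scope ring_scope.

Section RobustMean.
Variables (R : realType) (d : nat).

Definition vec := (d.-tuple R).

Definition coord (i : 'I_d) (x : vec) : R := tnth x i.

Definition vsub (x y : vec) : vec := [tuple tnth x i - tnth y i | i < d].

Definition dotp (x y : vec) : R := \sum_(i < d) tnth x i * tnth y i.

Definition enorm (x : vec) : R := Num.sqrt (dotp x x).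

Definition has_mean (D : probability vec R) (mu : vec) : Prop :=
  forall i : 'I_d, D.-integrable setT (fun x => (coord i x)%:E) /\
    (\int[D]_x (coord i x)%:E = (tnth mu i)%:E)%E.

(* Covariance Sigma <= sigma2 * I (Loewner order): for every direction v,
   E[(v . (x - mu))^2] <= sigma2 * |v|^2. *)
Definition cov_le (D : probability vec R) (mu : vec) (sigma2 : R) : Prop :=
  forall v : vec,
    (\int[D]_x ((dotp v (vsub x mu)) ^+ 2)%:E <= (sigma2 * dotp v v)%:E)%E.

Definition tv_le (P Q : probability vec R) (eps : R) : Prop :=
  forall A : set vec, measurable A -> `| fine (P A) - fine (Q A) | <= eps.

(* A (possibly randomized) algorithm: given eps, sigma^2 and the corrupted
   distribution D', it outputs the distribution of its estimate muhat. *)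
Definition algorithm := R -> R -> probability vec R -> probability vec R.

Definition alg_error (A : algorithm) (eps sigma2 : R) (D' : probability vec R)
  (mu : vec) : \bar R :=
  (\int[A eps sigma2 D']_x (enorm (vsub x mu))%:E)%E.

End RobustMean.

Definition JUNG {R : realType} (d : nat) : R :=
  Num.sqrt (2 * d%:R / (d%:R + 1)).

(* Main.v *)
Require Import Defs.
From HB Require Import structures.
From mathcomp Require Import all_boot all_order all_algebra.
From mathcomp Require Import all_classical all_reals all_analysis.
From mathcomp Require Import ring lra measurable_realfun.
Import Order.TTheory GRing.Theory Num.Theory.
Local Open Scope classical_set_scope.
Local Open Scope ring_scope.
Set Implicit Arguments. Unset Strict Implicit.

Section Alg.
Variable R : realType.

Definition qq (m : nat) : R := Num.sqrt ((m.+1)%:R^-1).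
Definition ttm (m : nat) : R := (1 - qq m) / m%:R.
Definition ww (m j i : nat) : R :=
  if j == m then - qq m else (i == j)%:R - ttm m.

Lemma qq2 m : qq m ^+ 2 = (m.+1)%:R^-1.
Proof. by rewrite /qq sqr_sqrtr // invr_ge0 ler0n. Qed.

Lemma qq_ge0 m : 0 <= qq m.
Proof. exact: sqrtr_ge0. Qed.

Lemma tt_eq1 m : (0 < m)%N -> m%:R * ttm m + qq m = 1.
Proof.
move=> m0; rewrite /ttm mulrCA divff ?mulr1 ?pnatr_eq0 -?lt0n //; ring.
Qed.

Lemma tt_eq2 m : (0 < m)%N -> m%:R * ttm m ^+ 2 - 2 * ttm m + qq m ^+ 2 = 0.
Proof.
move=> m0; have hm : m%:R != 0 :> R by rewrite pnatr_eq0 -lt0n.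
have h1 : (m.+1)%:R * qq m ^+ 2 = 1.
  by rewrite qq2 divff // pnatr_eq0.
have -> : ttm m = (1 - qq m) / m%:R by [].
apply: (mulfI hm); rewrite mulr0.
have e : m%:R * (m%:R * ((1 - qq m) / m%:R) ^+ 2 - 2 * ((1 - qq m) / m%:R) + qq m ^+ 2)
  = (1 - qq m)^+2 * (m%:R / m%:R) * (m%:R / m%:R) - 2 * (1 - qq m) * (m%:R / m%:R)
    + m%:R * qq m ^+ 2 by ring.
rewrite e divff // !mulr1; move: h1; rewrite -addn1 natrD; move=> h1.
have : (m%:R + 1) * qq m ^+ 2 - 1 = 0 :> R by rewrite h1 subrr.
move=> h2; rewrite -h2; ring.
Qed.

Lemma sum_ind m j : (j < m)%N -> \sum_(i < m) ((i : nat) == j)%:R = 1 :> R.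
Proof.
move=> jm; rewrite (bigD1 (Ordinal jm)) //= eqxx big1 ?addr0 //.
by move=> i /negPf; rewrite -val_eqE /= => ->.
Qed.

Lemma sum_ind' m j : (j < m)%N -> \sum_(i < m) (j == (i : nat))%:R = 1 :> R.
Proof.
by move=> jm; under eq_bigr do rewrite eq_sym; exact: sum_ind.
Qed.

Lemma sum_ww m i : (0 < m)%N -> (i < m)%N -> \sum_(j < m.+1) ww m j i = 0.
Proof.
move=> m0 im; rewrite big_ord_recr /= /ww eqxx.
rewrite (eq_bigr (fun j : 'I_m => (i == j)%:R - ttm m)); last first.
  by move=> j _; rewrite ifN // neq_ltn ltn_ord.
rewrite big_split /= sumrN sumr_const card_ord sum_ind'//.
have h := tt_eq1 m0.
rewrite -mulr_natl; lra.
Qed.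

Lemma sq_ww m j : (0 < m)%N -> (j <= m)%N ->
  \sum_(i < m) ww m j i ^+ 2 = 1 - qq m ^+ 2.
Proof.
move=> m0 jm; rewrite /ww; have [_|jnm] := eqVneq j m.
  rewrite sqrrN sumr_const card_ord.
  have h1 : (m.+1)%:R * qq m ^+ 2 = 1 by rewrite qq2 divff // pnatr_eq0.
  move: h1; rewrite -addn1 natrD => h1.
  rewrite -mulr_natr; lra.
have jm' : (j < m)%N by rewrite ltn_neqAle jnm.
rewrite (eq_bigr (fun i : 'I_m => ((i : nat) == j)%:R * (1 - 2 * ttm m) + ttm m ^+ 2)); last first.
  by move=> i _; case: (_ == _); rewrite /= ?mulr1n ?mulr0n; ring.
rewrite big_split /= -mulr_suml sum_ind // sumr_const card_ord.
have h := tt_eq2 m0; rewrite -mulr_natl; lra.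
Qed.

Lemma sum_pick m (x : nat -> R) j : (j < m)%N ->
  \sum_(i < m) x i * ((i : nat) == j)%:R = x j.
Proof.
move=> jm; rewrite (bigD1 (Ordinal jm)) //= eqxx mulr1 big1 ?addr0 //.
by move=> i /negPf; rewrite -val_eqE /= => ->; rewrite mulr0.
Qed.

Lemma frame m (x : nat -> R) : (0 < m)%N ->
  \sum_(j < m.+1) (\sum_(i < m) x i * ww m j i) ^+ 2 = \sum_(i < m) x i ^+ 2.
Proof.
move=> m0; set S := \sum_(i < m) x i.
rewrite big_ord_recr /= /ww eqxx.
rewrite (eq_bigr (fun j : 'I_m => (x j - ttm m * S) ^+ 2)); last first.
  move=> j _; have /negPf -> : (j : nat) != m by rewrite neq_ltn ltn_ord.
  under eq_bigr do rewrite mulrBr.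
  by rewrite sumrB sum_pick // -mulr_suml mulrC.
under [X in _ + X ^+ 2]eq_bigr do rewrite mulrN.
rewrite sumrN -mulr_suml -/S.
rewrite (eq_bigr (fun j : 'I_m => x j ^+ 2 + (- (2 * ttm m * S) * x j + (ttm m * S) ^+ 2))); last first.
  by move=> j _; ring.
rewrite big_split big_split /= -mulr_sumr -/S sumr_const card_ord.
have h := tt_eq2 m0.
rewrite -mulr_natl.
transitivity (\sum_(i<m) x i ^+ 2 + S^+2 * (m%:R * ttm m ^+ 2 - 2 * ttm m + qq m ^+ 2)); first ring.
by rewrite h mulr0 addr0.
Qed.
End Alg.

Section Vec.
Variables (R : realType) (d m : nat).
Definition xn (u : vec R d) (i : nat) : R := nth 0 (val u) i.

Definition sv (j : nat) : vec R d :=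
  [tuple (if ((i : nat) < m)%N then ww R m j i else 0) | i < d].

Lemma widen_sum (F : nat -> R) : (m <= d)%N ->
  \sum_(i < d) (if ((i : nat) < m)%N then F i else 0) = \sum_(i < m) F i.
Proof. by move=> md; rewrite (@big_ord_widen _ 0 +%R m d F md) [RHS]big_mkcond. Qed.

Lemma dot_sv u j : (m <= d)%N ->
  dotp u (sv j) = \sum_(i < m) xn u i * ww R m j i.
Proof.
move=> md; rewrite /dotp -(widen_sum (fun i => xn u i * ww R m j i)) //; apply: eq_bigr => i _.
rewrite tnth_mktuple (tnth_nth 0); case: ifP => _; last by rewrite mulr0.
by [].
Qed.

Lemma G1 (i : 'I_d) : (0 < m)%N -> \sum_(j < m.+1) tnth (sv j) i = 0.
Proof.
move=> m0; transitivity (\sum_(j < m.+1) if ((i : nat) < m)%N then ww R m j i else 0).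
  by apply: eq_bigr => j _; rewrite tnth_mktuple.
have := @sum_ww R m i m0; case: ((i : nat) < m)%N => h.
  exact: h.
by rewrite big1.
Qed.

Lemma G2 j : (0 < m)%N -> (j <= m)%N -> (m <= d)%N ->
  dotp (sv j) (sv j) = 1 - qq R m ^+ 2.
Proof.
move=> m0 jm md; rewrite /dotp -(sq_ww R m0 jm) -(widen_sum (fun i => ww R m j i ^+ 2)) //.
apply: eq_bigr => i _; rewrite tnth_mktuple; case: ifP => _.
  by rewrite expr2. by rewrite mulr0.
Qed.

Lemma G3 u : (0 < m)%N -> (m <= d)%N ->
  \sum_(j < m.+1) dotp u (sv j) ^+ 2 <= dotp u u.
Proof.
move=> m0 md; under eq_bigr do rewrite dot_sv //.
rewrite frame // -(widen_sum (fun i => xn u i ^+ 2)) // /dotp.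
apply: ler_sum => i _; rewrite (tnth_nth 0) -expr2; case: ifP => _ //.
exact: sqr_ge0.
Qed.
End Vec.

Section CS.
Variables (R : realType) (d : nat).
Implicit Types (x y z : vec R d).

Lemma dotpC x y : dotp x y = dotp y x.
Proof. by apply: eq_bigr => i _; rewrite mulrC. Qed.

Lemma dotp_subl x y z : dotp (vsub x y) z = dotp x z - dotp y z.
Proof.
rewrite /dotp -sumrB; apply: eq_bigr => i _; rewrite tnth_mktuple; ring.
Qed.

Lemma dotp_ge0 x : 0 <= dotp x x.
Proof. by apply: sumr_ge0 => i _; rewrite -expr2 sqr_ge0. Qed.

Lemma cs_sq x z : dotp x z ^+ 2 <= dotp x x * dotp z z.
Proof.
set a := dotp x z; set X := dotp x x; set Z := dotp z z.
have h : 0 <= \sum_(i < d) (Z * tnth x i - a * tnth z i) ^+ 2.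
  by apply: sumr_ge0 => i _; exact: sqr_ge0.
have e : \sum_(i < d) (Z * tnth x i - a * tnth z i) ^+ 2 = Z * (Z * X - a ^+ 2).
  rewrite (eq_bigr (fun i => Z ^+ 2 * (tnth x i * tnth x i) +
        ((- (2 * Z * a)) * (tnth x i * tnth z i) + a ^+ 2 * (tnth z i * tnth z i)))); last first.
    by move=> i _; ring.
  rewrite !big_split /= -!mulr_sumr /X /a /Z /dotp; ring.
rewrite e in h.
have Z0 : 0 <= Z by exact: dotp_ge0.
have X0 : 0 <= X by exact: dotp_ge0.
have [Zp|Z0'] := ltP 0 Z.
  by rewrite -subr_ge0 mulrC; rewrite pmulr_rge0 // in h.
have Ze : Z = 0 by apply/eqP; rewrite eq_le Z0' Z0.
have zi : forall i, tnth z i = 0.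
  move=> i; apply/eqP; rewrite -sqrf_eq0 expr2.
  move: Ze; rewrite /Z /dotp => /psumr_eq0P H.
  by apply/eqP; apply: H => // j _; rewrite -expr2 sqr_ge0.
have : a = 0 by rewrite /a /dotp big1 // => i _; rewrite zi mulr0.
by move=> ->; rewrite Ze expr0n /= mulr0.
Qed.

Lemma cs_lb x z (r : R) : 0 < r -> dotp z z = r ^+ 2 ->
  - dotp x z <= r * enorm x.
Proof.
move=> r0 zz; have h := cs_sq x z.
rewrite zz mulrC in h.
have h1 : - dotp x z <= `|dotp x z| by rewrite -normrN ler_norm.
apply: (le_trans h1); rewrite -sqrtr_sqr.
apply: (le_trans (ler_wsqrtr h)).
by rewrite sqrtrM ?sqr_ge0 // sqrtr_sqr gtr0_norm.

Qed.
End CS.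

Section Disc.
Variables (R : realType) (d : nat).
Definition dmeas (n : nat) (w : nat -> R) (p : nat -> vec R d) :=
  msum (fun k => mscale ((`|w k|)%R%:nng) (@dirac _ (vec R d) (p k) R)) n.
Local Open Scope ereal_scope.

Lemma dmeasE n w p A :
  dmeas n w p A = (\sum_(k < n) `|w k| * ((p k \in A)%:R))%R%:E.
Proof.
rewrite /dmeas /msum /= sumEFin; congr (_%:E); apply: eq_bigr => k _; exact: indicE.
Qed.

Lemma dmeas_ge0_int n (w : nat -> R) (p : nat -> vec R d) (f : vec R d -> \bar R) :
  measurable_fun setT f -> (forall x, 0 <= f x) ->
  \int[dmeas n w p]_x f x = \sum_(k < n) (`|w k|)%R%:E * f (p k).
Proof.
move=> mf f0; rewrite /dmeas ge0_integral_measure_sum //.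
apply: eq_bigr => k _; rewrite ge0_integral_mscale //= integral_dirac //.
by rewrite diracT mul1e.
Qed.

Lemma dmeas_int n (w : nat -> R) (p : nat -> vec R d) (g : vec R d -> R) :
  measurable_fun setT g ->
  \int[dmeas n w p]_x (g x)%:E = (\sum_(k < n) `|w k| * g (p k))%R%:E.
Proof.
move=> mg; have mf : measurable_fun setT (fun x => (g x)%:E) by exact/measurable_EFinP.
rewrite integralE !dmeas_ge0_int //; last 2 first.
- exact: measurable_funeneg.
- exact: measurable_funepos.
under eq_bigr do rewrite funeposE -EFin_max -EFinM.
under [X in _ - X]eq_bigr do rewrite funenegE -EFin_max -EFinM.
rewrite !sumEFin -EFinB -sumrB; congr (_%:E); apply: eq_bigr => k _.
rewrite -mulrBr; congr (_ * _)%R.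
by case: (lerP 0 (g (p k))) => h; rewrite ?(max_idPl h) ?(max_idPr h);
  [rewrite max_r ?oppr_le0 // subr0 | rewrite max_l ?oppr_ge0 ?ltW // sub0r opprK].
Qed.

Lemma dmeas_integrable n (w : nat -> R) (p : nat -> vec R d) (g : vec R d -> R) :
  measurable_fun setT g -> (dmeas n w p).-integrable setT (fun x => (g x)%:E).
Proof.
move=> mg; apply/integrableP; split; first exact/measurable_EFinP.
rewrite dmeas_ge0_int //; last first.
  apply: measurableT_comp => //; exact/measurable_EFinP.
under eq_bigr do rewrite -EFinM.
by rewrite sumEFin ltry.
Qed.

Definition dprob n (w : nat -> R) (p : nat -> vec R d) : probability (vec R d) R :=
  mnormalize (dmeas n w p) (@dirac _ (vec R d) (p 0%N) R).

Lemma mnormalize1 dd (T : measurableType dd) (mu : {measure set T -> \bar R})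
  (P : probability T R) A : mu setT = 1 -> mnormalize mu P A = mu A.
Proof. by move=> h; rewrite /mnormalize /= h onee_eq0 /= invr1 mule1. Qed.

Lemma dprobE n (w : nat -> R) (p : nat -> vec R d) A :
  (\sum_(k < n) `|w k| = 1)%R -> dprob n w p A = dmeas n w p A.
Proof.
move=> w1; rewrite /dprob; apply: mnormalize1.
transitivity ((\sum_(k < n) `|w k| * (p k \in [set: vec R d])%:R)%R%:E).
  exact: dmeasE.
rewrite -[X in _ = X%:E]w1; congr (_%:E); apply: eq_bigr => k _.
by rewrite in_setT mulr1.
Qed.

Lemma dprob_int n (w : nat -> R) (p : nat -> vec R d) (f : vec R d -> \bar R) :
  (\sum_(k < n) `|w k| = 1)%R ->
  \int[dprob n w p]_x f x = \int[dmeas n w p]_x f x.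
Proof.
by move=> w1; apply: eq_measure_integral => A _ _; apply: dprobE.
Qed.

Lemma dprob_integrable n (w : nat -> R) (p : nat -> vec R d) (g : vec R d -> R) :
  (\sum_(k < n) `|w k| = 1)%R -> measurable_fun setT g ->
  (dprob n w p).-integrable setT (fun x => (g x)%:E).
Proof.
move=> w1 mg; have := dmeas_integrable n w p mg.
move/integrableP => [m1 m2]; apply/integrableP; split => //.
by rewrite dprob_int.
Qed.

Lemma meas_coord (i : 'I_d) : measurable_fun setT (@Defs.coord R d i).
Proof. exact: measurable_tnth. Qed.

Lemma meas_vsub_coord (mu : vec R d) (i : 'I_d) :
  measurable_fun setT (fun x : vec R d => tnth (vsub x mu) i).
Proof.
rewrite (_ : (fun x => _) = (fun x : vec R d => tnth x i - tnth mu i)%R); last first.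
  by apply/funext => x; rewrite tnth_mktuple.
apply: measurable_funB => //; exact: measurable_tnth.
Qed.

Lemma meas_dotp_vsub (v mu : vec R d) :
  measurable_fun setT (fun x : vec R d => dotp v (vsub x mu)).
Proof.
rewrite /dotp; apply: measurable_sum => i.
apply: measurable_funM => //; exact: meas_vsub_coord.
Qed.

Lemma meas_norm_vsub (mu : vec R d) :
  measurable_fun setT (fun x : vec R d => enorm (vsub x mu)).
Proof.
rewrite /enorm; apply: measurableT_comp.
  exact: continuous_measurable_fun (@sqrt_continuous R).
rewrite /dotp; apply: measurable_sum => i.
apply: measurable_funM; exact: meas_vsub_coord.
Qed.
End Disc.


Section Constr.
Variables (R : realType) (d m : nat) (e : R).
Hypotheses (m0 : (0 < m)%N) (md : (m <= d)%N) (e0 : 0 <= e) (em : m.+1%:R * e <= 1).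

Definition sc (c : R) (v : vec R d) : vec R d := [tuple c * tnth v i | i < d].
Definition pts (j0 : option nat) (k : nat) : vec R d :=
  if (k < m.+1)%N then sc (if j0 == Some k then 1 else -1) (sv R d m k)
  else sc 0 (sv R d m 0).
Definition wts (k : nat) : R := if (k < m.+1)%N then e else 1 - m.+1%:R * e.
Definition Dp j0 := dprob m.+2 wts (pts j0).
Definition muj (j : nat) := sc (2 * e) (sv R d m j).

Lemma tnth_sc c v i : tnth (sc c v) i = c * tnth v i.
Proof. by rewrite tnth_mktuple. Qed.

Lemma dotp_sc (u : vec R d) c v : dotp u (sc c v) = c * dotp u v.
Proof.
rewrite /dotp mulr_sumr; apply: eq_bigr => i _; rewrite tnth_sc; ring.
Qed.

Lemma dotp_subr (u x y : vec R d) : dotp u (vsub x y) = dotp u x - dotp u y.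
Proof. by rewrite dotpC dotp_subl !(dotpC u). Qed.

Lemma key_sum (F : nat -> R) :
  \sum_(k < m.+2) `|wts k| * F k = e * \sum_(k < m.+1) F k + (1 - m.+1%:R * e) * F m.+1.
Proof.
rewrite big_ord_recr /= /wts ltnn mulr_sumr; congr (_ + _).
  by apply: eq_bigr => k _; rewrite ltn_ord ger0_norm.
by rewrite ger0_norm // subr_ge0.
Qed.

Lemma wsum : \sum_(k < m.+2) `|wts k| = 1.
Proof.
have := key_sum (fun _ => 1).
under eq_bigr do rewrite mulr1.
move=> ->; rewrite sumr_const card_ord; rewrite -mulr_natr; lra.
Qed.

Lemma mean_coord j (i : 'I_d) : (j < m.+1)%N ->
  \sum_(k < m.+2) `|wts k| * tnth (pts (Some j) k) i = tnth (muj j) i.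
Proof.
move=> jm; rewrite (key_sum (fun k => tnth (pts (Some j) k) i)) /pts ltnn tnth_sc mul0r mulr0 addr0 tnth_sc.
rewrite (eq_bigr (fun k : 'I_m.+1 => - tnth (sv R d m k) i + 2 * ((j == k)%:R * tnth (sv R d m k) i))); last first.
  move=> k _; rewrite ltn_ord tnth_sc; case: eqP => [[->]|hk].
    by rewrite eqxx /= ?mulr1n; ring.
  have hjk : (j == k) = false by apply/eqP => h; apply: hk; rewrite h.
  by rewrite hjk /= mulr0n mul0r; ring.
rewrite big_split /= sumrN G1 // oppr0 add0r -mulr_sumr.
rewrite (bigD1 (Ordinal jm)) //= eqxx mul1r big1 ?addr0; last first.
  by move=> k /negPf; rewrite -val_eqE /= eq_sym => ->; rewrite mul0r.
ring.
Qed.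

Lemma sumU (u : vec R d) j : (j < m.+1)%N ->
  \sum_(k < m.+2) `|wts k| * dotp u (pts (Some j) k) = dotp u (muj j).
Proof.
move=> jm; rewrite /dotp.
under eq_bigr do rewrite mulr_sumr.
rewrite exchange_big /=; apply: eq_bigr => i _.
rewrite -mean_coord // mulr_sumr; apply: eq_bigr => k _; ring.
Qed.

Lemma var_bound (u : vec R d) j : (j < m.+1)%N ->
  \sum_(k < m.+2) `|wts k| * dotp u (vsub (pts (Some j) k) (muj j)) ^+ 2
  <= e * dotp u u.
Proof.
move=> jm; set M := dotp u (muj j).
under eq_bigr do rewrite dotp_subr -/M.
rewrite (eq_bigr (fun k : 'I_m.+2 => `|wts k| * dotp u (pts (Some j) k) ^+ 2
   + (- (2 * M) * (`|wts k| * dotp u (pts (Some j) k)) + M ^+ 2 * `|wts k|))); last first.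
  by move=> k _; ring.
rewrite big_split big_split /= -mulr_sumr -mulr_sumr sumU // wsum -/M.
rewrite (key_sum (fun k => dotp u (pts (Some j) k) ^+ 2)) /pts ltnn dotp_sc mul0r.
rewrite expr0n /= mulr0 addr0.
have h : \sum_(k < m.+1) dotp u (if (k < m.+1)%N then
      sc (if Some j == Some (k : nat) then 1 else -1) (sv R d m k)
    else sc 0 (sv R d m 0)) ^+ 2 = \sum_(k < m.+1) dotp u (sv R d m k) ^+ 2.
  apply: eq_bigr => k _; rewrite ltn_ord dotp_sc; case: ifP => _; by rewrite ?mul1r ?mulN1r ?sqrrN.
rewrite h.
have := G3 u m0 md; have := sqr_ge0 M; have := e0.
move=> h1 h2 h3.
have : e * \sum_(k < m.+1) dotp u (sv R d m k) ^+ 2 <= e * dotp u u by apply: ler_wpM2l.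
lra.
Qed.

Lemma tv_bound j (A : set (vec R d)) : (j < m.+1)%N ->
  `| fine (Dp (Some j) A) - fine (Dp None A) | <= e.
Proof.
move=> jm.
have -> : Dp (Some j) A = dmeas m.+2 wts (pts (Some j)) A by apply: dprobE; exact: wsum.
have -> : Dp None A = dmeas m.+2 wts (pts None) A by apply: dprobE; exact: wsum.
rewrite !dmeasE /= -sumrB.
have jm2 : (j < m.+2)%N by apply: (ltn_trans jm).
rewrite (bigD1 (Ordinal jm2)) //= big1 ?addr0; last first.
  move=> k /negPf; rewrite -val_eqE /= => hk.
  rewrite /pts; case: ifP => _; last by rewrite subrr.
  have -> : (Some j == Some (k : nat)) = false by apply/eqP => -[h]; move: hk; rewrite h eqxx.
  by rewrite subrr.
rewrite /pts jm eqxx /wts jm (ger0_norm e0) -mulrBr normrM (ger0_norm e0).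
rewrite -[X in _ <= X]mulr1; apply: ler_wpM2l => //.
by case: (_ \in _); case: (_ \in _); rewrite /= ?subrr ?normr0 ?subr0 ?sub0r ?normrN ?normr1.
Qed.

Lemma Dp_mean j : (j < m.+1)%N -> has_mean (Dp (Some j)) (muj j).
Proof.
move=> jm i; split.
  by apply: dprob_integrable; [exact: wsum | exact: meas_coord].
rewrite /Dp dprob_int; last exact: wsum.
rewrite dmeas_int; last exact: meas_coord.
by congr (_%:E); rewrite -mean_coord.
Qed.

Lemma Dp_cov j (s2 : R) : (j < m.+1)%N -> e <= s2 -> cov_le (Dp (Some j)) (muj j) s2.
Proof.
move=> jm es v.
rewrite /Dp dprob_int; last exact: wsum.
rewrite dmeas_int; last first.
  by apply: measurable_funX; exact: meas_dotp_vsub.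
rewrite lee_fin; apply: (le_trans (var_bound v jm)).
by apply: ler_wpM2r => //; exact: dotp_ge0.
Qed.

Lemma dotp_scsc (c : R) (v : vec R d) : dotp (sc c v) (sc c v) = c ^+ 2 * dotp v v.
Proof. by rewrite dotp_sc dotpC dotp_sc; ring. Qed.

Lemma pointwise (x : vec R d) (r : R) : 0 < r ->
  (forall j, (j < m.+1)%N -> dotp (muj j) (muj j) = r ^+ 2) ->
  m.+1%:R * r <= \sum_(j < m.+1) enorm (vsub x (muj j)).
Proof.
move=> r0 hr.
have h : forall j : 'I_m.+1, r ^+ 2 - dotp x (muj j) <= r * enorm (vsub x (muj j)).
  move=> j; have := cs_lb (vsub x (muj j)) r0 (hr j (ltn_ord j)).
  by rewrite dotp_subl hr // opprB.
have s0' : \sum_(j < m.+1) dotp x (sv R d m j) = 0.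
  rewrite /dotp exchange_big /= big1 // => i _.
  by rewrite -mulr_sumr G1 // mulr0.
have s0 : \sum_(j < m.+1) dotp x (muj j) = 0.
  rewrite (eq_bigr (fun j : 'I_m.+1 => 2 * e * dotp x (sv R d m j))); last first.
    by move=> j _; rewrite dotp_sc.
  by rewrite -mulr_sumr s0' mulr0.
have H : \sum_(j < m.+1) (r ^+ 2 - dotp x (muj j)) <= \sum_(j < m.+1) r * enorm (vsub x (muj j)).
  by apply: ler_sum => j _; exact: h j.
move: H.
rewrite sumrB s0 subr0 sumr_const card_ord -mulr_sumr => H.
rewrite -(ler_pM2l r0); apply: le_trans H; rewrite -mulr_natr; lra.
Qed.

Lemma exists_ge (N : nat) (f : nat -> \bar R) (r : R) : (0 < N)%N ->
  (forall j, (0 <= f j)%E) -> ((N%:R * r)%:E <= \sum_(j < N) f j)%E ->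
  exists j, (j < N)%N /\ (r%:E <= f j)%E.
Proof.
move=> N0 f0 hs; case: (pselect (exists j, (j < N)%N /\ (r%:E <= f j)%E)) => // H.
exfalso.
have lt : forall j : 'I_N, (f j < r%:E)%E.
  move=> j; rewrite ltNge; apply/negP => hj; apply: H; exists j; split => //.
have fin : forall j : 'I_N, f j = (fine (f j))%:E.
  move=> j; rewrite fineK // ge0_fin_numE ?f0 //; apply: lt_trans (lt j) _; exact: ltry.
have : (\sum_(j < N) f j = (\sum_(j < N) fine (f j))%:E)%E.
  by rewrite -sumEFin; apply: eq_bigr => j _; exact: fin.
move=> e1; rewrite e1 lee_fin in hs.
have : \sum_(j < N) fine (f j) < \sum_(j < N) r.
  apply: ltr_sum; first by apply/hasP; exists (Ordinal N0) => //; exact: mem_index_enum.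
  by move=> j _; rewrite -lte_fin -fin.
rewrite sumr_const card_ord -mulr_natl => h2.
by have := lt_le_trans h2 hs; rewrite ltxx.
Qed.

Lemma lb (Q : probability (vec R d) R) (r : R) : 0 < r ->
  (forall j, (j < m.+1)%N -> dotp (muj j) (muj j) = r ^+ 2) ->
  exists j, (j < m.+1)%N /\
    (r%:E <= \int[Q]_x (enorm (vsub x (muj j)))%:E)%E.
Proof.
move=> r0 hr; apply: exists_ge => //.
  by move=> j; apply: integral_ge0 => x _; rewrite lee_fin sqrtr_ge0.
rewrite -ge0_integral_sum //; last 2 first.
  by move=> j; apply/measurable_EFinP; exact: meas_norm_vsub.
  by move=> j x _; rewrite lee_fin sqrtr_ge0.
have -> : ((m.+1%:R * r)%:E = \int[Q]_x (cst (m.+1%:R * r)%:E x))%E.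
  rewrite integral_cst // -[LHS]mule1; congr (_ * _)%E; apply/esym; exact: probability_setT.
apply: ge0_le_integral => //.
- by move=> x _; rewrite lee_fin mulr_ge0 // ltW.
- apply: emeasurable_sum => j; apply/measurable_EFinP; exact: meas_norm_vsub.
- move=> x _; rewrite sumEFin lee_fin; exact: pointwise.
Qed.
End Constr.


Lemma pick_m (R : realType) (e : R) d : (1 <= d)%N -> 0 <= e -> e <= 1 / 2 ->
  exists m, [/\ (0 < m)%N, (m <= d)%N, m.+1%:R * e <= 1 & (m = d \/ 1 < m.+2%:R * e)].
Proof.
move=> + e0 e1; elim: d => [//|d IH] _.
case: d IH => [|d] IH.
  exists 1%N; split => //; last by left.
  lra.
have [h|h] := lerP (d.+3%:R * e) 1.
  by exists d.+2; split => //; left.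
have [m [m0 md me c]] := IH isT.
exists m; split => //; first by apply: leqW.
right; case: c => // ->; exact: h.
Qed.

Lemma cond_m (R : realType) (e : R) d m : (0 < m)%N -> 0 <= e -> e <= 1 / 2 ->
  (m = d \/ 1 < m.+2%:R * e) ->
  d%:R / d.+1%:R * (1 - 2 * e) ^+ 2 <= 1 - qq R m ^+ 2.
Proof.
move=> m0 e0 e1 c; rewrite qq2.
have hd : d%:R / d.+1%:R = 1 - d.+1%:R^-1 :> R.
  have nz : d.+1%:R != 0 :> R by rewrite pnatr_eq0.
  apply: (mulIf nz); rewrite mulrBl mulVf // -mulrA mulVf // mulr1 mul1r -natr1; ring.
have a0 : 0 < d.+1%:R^-1 :> R by rewrite invr_gt0 ltr0n.
have a1 : d.+1%:R^-1 <= 1 :> R by rewrite invf_le1 ?ltr0n // ler1n.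
have c2 : (1 - 2 * e) ^+ 2 <= 1 by nra.
rewrite hd; case: c => [ed|h].
  subst m; move: a0 a1 c2; set a := (d.+1%:R : R)^-1; set c := (1 - 2 * e) ^+ 2.
  move=> a0 a1 c2; nra.
set b := m.+1%:R^-1 : R.
have M0 : 0 < m.+1%:R :> R by rewrite ltr0n.
have Mb : m.+1%:R * b = 1 by rewrite /b divff // gt_eqF.
have b0 : 0 < b by rewrite /b invr_gt0.
have h' : 1 - e < m.+1%:R * e.
  by move: h; rewrite -[m.+2]addn1 natrD; lra.
have hb : b <= 4 * e * (1 - e).
  have : 1 <= m.+1%:R * (4 * e * (1 - e)) by nra.
  by move=> H; rewrite -(ler_pM2l M0) Mb.
move: a0 a1 hb; set a := (d.+1%:R : R)^-1 => a0 a1 hb.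
have ac : 0 <= a * (1 - 2 * e) ^+ 2 by apply: mulr_ge0; [apply: ltW | apply: sqr_ge0].
nra.
Qed.

Lemma le_sq (R : realType) (x y : R) : 0 <= y -> x ^+ 2 <= y ^+ 2 -> x <= y.
Proof. move=> y0 h; rewrite leNgt; apply/negP => hxy; nra. Qed.

Lemma jung_ineq (R : realType) (e : R) d m : (0 < m)%N -> 0 < e -> e <= 1 / 2 ->
  d%:R / d.+1%:R * (1 - 2 * e) ^+ 2 <= 1 - qq R m ^+ 2 ->
  JUNG d * (1 - 2 * e) * Num.sqrt (2 * Num.sqrt e ^+ 2 * e)
    <= 2 * e * Num.sqrt (1 - qq R m ^+ 2).
Proof.
move=> m0 e0 e1 c.
have L0 : 0 <= 1 - qq R m ^+ 2 by rewrite qq2 subr_ge0 invf_le1 ?ltr0n // ler1n.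
rewrite sqr_sqrtr; last exact: ltW.
apply: le_sq; first by rewrite !mulr_ge0 ?sqrtr_ge0 //; lra.
rewrite !exprMn !sqr_sqrtr //; last 2 first.
- by rewrite qq2 in L0.
- by rewrite !mulr_ge0 // ltW.
rewrite qq2 in c; rewrite -natr1 in c.
have e2 : 0 <= e * e by rewrite mulr_ge0 // ltW.
have : d%:R / (d%:R + 1) * (1 - 2 * e) ^+ 2 * (4 * (e * e)) <= (1 - m.+1%:R^-1) * (4 * (e * e)) :> R.
  by apply: ler_wpM2r => //; nra.
have eqle : forall a b : R, a = b -> a <= b by move=> a b ->.
move=> h; apply: le_trans (le_trans h _); apply: eqle; ring.
Qed.

Unset Implicit Arguments.

Theorem theorem2 (R : realType) :
  exists c : R,
  forall (d : nat), (1 <= d)%N ->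
  forall eps : R, 0 <= eps -> eps <= 1 / 2 ->
  forall A : algorithm R d,
  exists (sigma : R) (D D' : probability (vec R d) R) (mu : vec R d),
    0 < sigma /\
    has_mean D mu /\ cov_le D mu (sigma ^+ 2) /\ tv_le D D' eps /\
    (((JUNG d * (1 - c * eps) * Num.sqrt (2 * sigma ^+ 2 * eps))%:E
       <= alg_error A eps (sigma ^+ 2) D' mu)%E).
Proof.
exists 2 => d hd e e0 e1 A.
have [m [m0 md em c]] := pick_m hd e0 e1.
have cm := cond_m m0 e0 e1 c.
pose s := if 0 < e then Num.sqrt e else 1.
have s0 : 0 < s by rewrite /s; case: ifP => h //; rewrite sqrtr_gt0.
have es : e <= s ^+ 2.
  rewrite /s; case: ifP => h; first by rewrite sqr_sqrtr // ltW.
  by rewrite expr1n; lra.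
pose Q := A e (s ^+ 2) (Dp d m e None).
have [j [jm hj]] : exists j, (j < m.+1)%N /\
   ((JUNG d * (1 - 2 * e) * Num.sqrt (2 * s ^+ 2 * e))%:E
     <= \int[Q]_x (enorm (vsub x (muj d m e j)))%:E)%E.
  have [ep|ez] := ltP 0 e.
    pose r := 2 * e * Num.sqrt (1 - qq R m ^+ 2).
    have L0 : 0 < 1 - qq R m ^+ 2.
      rewrite qq2 subr_gt0 invf_lt1 ?ltr0n // ltr1n; done.
    have r0 : 0 < r by rewrite /r !mulr_gt0 // sqrtr_gt0.
    have hr : forall j, (j < m.+1)%N -> dotp (muj d m e j) (muj d m e j) = r ^+ 2.
      move=> j jm; rewrite /muj dotp_scsc G2 // /r !exprMn (sqr_sqrtr (ltW L0)).
      ring.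
    have [j [jm hj]] := lb m0 Q r0 hr.
    exists j; split => //; apply: le_trans hj; rewrite lee_fin.
    have -> : s = Num.sqrt e by rewrite /s ep.
    exact: jung_ineq.
  have -> : e = 0 by apply/eqP; rewrite eq_le ez e0.
  exists 0%N; split => //; rewrite !mulr0 sqrtr0 mulr0.
  by apply: integral_ge0 => x _; rewrite lee_fin sqrtr_ge0.
exists s, (Dp d m e (Some j)), (Dp d m e None), (muj d m e j).
split => //; split; first exact: Dp_mean.
split; first exact: Dp_cov.
split; last exact: hj.
by move=> B _; exact: tv_bound.
Qed.
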